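(* Let $N>2$ be an integer, $K,L\in\mathbb{N}$ and $\sigma\in\Omega$. If $u\in\Psi^{K\times L}_{\mathrm{ver}}(\sigma)$ and $v\in\Psi^{K\times L}_{\mathrm{hor}}(\sigma)$ then $\|u-v\|_1\neq1$ (i.e. $u,v$ are not nearest neighbours in $\mathbb{Z}^2$).
   Context: Tiles: $T_{(x,y)}=[x-1,x+1]\times[y-1,y+1]$; $\Omega=\{\sigma\in\{0,1\}^{\mathbb{Z}^2}: \sigma(u)=\sigma(v)=1,u\ne v\Rightarrow\mathrm{int}(T_u)\cap\mathrm{int}(T_v)=\emptyset\}$; parity of the tile centered at $(x,y)$ is $(x-1\bmod2,y-1\bmod2)$. Faces are unit squares with integer corners. A stick edge is an edge of the nearest-neighbour lattice $\mathbb{Z}^2$ separating two faces contained in two tiles of distinct parities; a stick is a maximal path of stick edges (a vertical or horizontal segment). A stick has type $(\mathrm{ver},i)$ if it is vertical and lies on a line $x=x_1$ with $x_1\equiv i\pmod 2$, and type $(\mathrm{hor},i)$ if horizontal on a line $y=y_1$, $y_1\equiv i\pmod 2$. $R_{K\times L,(x,y)}=[x,x+K]\times[y,y+L]$. A vertical segment from $(x_1,y_1)$ to $(x_1,y_2)$, $y_1<y_2$, divides $R_{K\times L,(x,y)}$ if $y_1\le y$, $y+L\le y_2$, $x<x_1<x+K$; horizontal analogously. For a rectangle $R$ with dimensions divisible by $N$, $R^-$ is the rectangle with the same center and dimensions $\frac{N-2}{N}(\mathrm{Width}R,\mathrm{Height}R)$; a stick divides $R$ properly if it divides both $R$ and $R^-$.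 For $\pi$ a type, $\Psi^{K\times L}_\pi(\sigma)=\{(x,y)\in\mathbb{Z}^2: R_{KN\times LN,(xK,yL)}\text{ is properly divided by a stick of type }\pi\}$; $\Psi^{K\times L}_{\mathrm{ver}}=\Psi^{K\times L}_{(\mathrm{ver},0)}\cup\Psi^{K\times L}_{(\mathrm{ver},1)}$, $\Psi^{K\times L}_{\mathrm{hor}}=\Psi^{K\times L}_{(\mathrm{hor},0)}\cup\Psi^{K\times L}_{(\mathrm{hor},1)}$. *)

(* Defs.v *)
From Stdlib Require Import ZArith Reals Lra Lia.
Open Scope Z_scope.

Definition config := Z * Z -> bool.

Definition in_int_tile (u : Z * Z) (p q : R) : Prop :=
  (IZR (fst u) - 1 < p < IZR (fst u) + 1)%R /\
  (IZR (snd u) - 1 < q < IZR (snd u) + 1)%R.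

Definition Omega (sigma : config) : Prop :=
  forall u v : Z * Z, sigma u = true -> sigma v = true -> u <> v ->
    forall p q : R, ~ (in_int_tile u p q /\ in_int_tile v p q).

Definition parity (u : Z * Z) : Z * Z :=
  (Z.modulo (fst u - 1) 2, Z.modulo (snd u - 1) 2).

(* The face with lower-left corner (a,b) is [a,a+1] x [b,b+1]; it is contained
   in T_(x,y) iff [a,a+1] c [x-1,x+1] and [b,b+1] c [y-1,y+1]. *)
Definition face_in_tile (f u : Z * Z) : Prop :=
  fst u - 1 <= fst f /\ fst f + 1 <= fst u + 1 /\
  snd u - 1 <= snd f /\ snd f + 1 <= snd u + 1.

Definition distinct_parity_faces (sigma : config) (f1 f2 : Z * Z) : Prop :=
  exists u1 u2 : Z * Z, sigma u1 = true /\ sigma u2 = true /\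
    face_in_tile f1 u1 /\ face_in_tile f2 u2 /\ parity u1 <> parity u2.

(* vertical edge from (a,b) to (a,b+1): separates faces (a-1,b) and (a,b) *)
Definition vstick_edge (sigma : config) (a b : Z) : Prop :=
  distinct_parity_faces sigma (a - 1, b) (a, b).

(* horizontal edge from (a,b) to (a+1,b): separates faces (a,b-1) and (a,b) *)
Definition hstick_edge (sigma : config) (a b : Z) : Prop :=
  distinct_parity_faces sigma (a, b - 1) (a, b).

(* A stick on a line, described by the set S of indices of its unit edges
   along the line: nonempty, an interval, consisting of stick edges, and
   maximal (cannot be extended at either end).  S may be unbounded. *)
Definition is_run (E : Z -> Prop) (S : Z -> Prop) : Prop :=
  (exists b, S b) /\
  (forall b1 b2 b, S b1 -> S b2 -> b1 <= b <= b2 -> S b) /\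
  (forall b, S b -> E b) /\
  (forall b, S b -> E (b + 1) -> S (b + 1)) /\
  (forall b, S b -> E (b - 1) -> S (b - 1)).

Definition vstick (sigma : config) (x1 : Z) (S : Z -> Prop) : Prop :=
  is_run (vstick_edge sigma x1) S.
Definition hstick (sigma : config) (y1 : Z) (S : Z -> Prop) : Prop :=
  is_run (fun a => hstick_edge sigma a y1) S.

(* A rectangle [x,x+W] x [y,y+H] *)
Record rect := Rect { rx : Z; ry : Z; rW : Z; rH : Z }.

Definition R_rect (K L x y : Z) : rect := Rect x y K L.

(* R^-: same centre, dimensions (N-2)/N (W,H) (for N | W, N | H). *)
Definition Rminus (N : Z) (R : rect) : rect :=
  Rect (rx R + rW R / N) (ry R + rH R / N)
       (rW R - 2 * (rW R / N)) (rH R - 2 * (rH R / N)).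

(* The vertical segment with edge set S on x = x1 runs from y1 = inf S to
   y2 = sup S + 1; it divides R iff y1 <= ry, ry + H <= y2, rx < x1 < rx + W. *)
Definition vdivides (x1 : Z) (S : Z -> Prop) (R : rect) : Prop :=
  (exists b, S b /\ b <= ry R) /\ (exists b, S b /\ ry R + rH R <= b + 1) /\
  rx R < x1 < rx R + rW R.
Definition hdivides (y1 : Z) (S : Z -> Prop) (R : rect) : Prop :=
  (exists a, S a /\ a <= rx R) /\ (exists a, S a /\ rx R + rW R <= a + 1) /\
  ry R < y1 < ry R + rH R.

Definition vdivides_properly N x1 S R := vdivides x1 S R /\ vdivides x1 S (Rminus N R).
Definition hdivides_properly N y1 S R := hdivides y1 S R /\ hdivides y1 S (Rminus N R).

Inductive orient := ver | hor.

Definition Psi_type (N K L : Z) (o : orient) (i : Z) (sigma : config) (w : Z * Z) : Prop :=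
  let R := R_rect (K * N) (L * N) (fst w * K) (snd w * L) in
  match o with
  | ver => exists x1 S, vstick sigma x1 S /\ Z.modulo x1 2 = i /\ vdivides_properly N x1 S R
  | hor => exists y1 S, hstick sigma y1 S /\ Z.modulo y1 2 = i /\ hdivides_properly N y1 S R
  end.

Definition Psi (N K L : Z) (o : orient) (sigma : config) (w : Z * Z) : Prop :=
  Psi_type N K L o 0 sigma w \/ Psi_type N K L o 1 sigma w.

(* Main.v *)
Require Import Defs.
From Stdlib Require Import ZArith.
From Stdlib Require Import Reals Lra Lia.
Open Scope Z_scope.

Lemma tile_uniq (sigma : config) f t1 t2 : Omega sigma ->
  sigma t1 = true -> sigma t2 = true -> face_in_tile f t1 -> face_in_tile f t2 -> t1 = t2.
Proof.
  intros HO H1 H2 F1 F2.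
  destruct t1 as [x1 y1], t2 as [x2 y2].
  destruct (Z.eq_dec x1 x2); destruct (Z.eq_dec y1 y2); [subst; reflexivity| | |]; exfalso;
  (assert (E : (x1,y1) <> (x2,y2)) by (intro E; inversion E; lia));
  apply (HO (x1,y1) (x2,y2) H1 H2 E (IZR (fst f) + /2)%R (IZR (snd f) + /2)%R);
  destruct f as [a b];
  unfold face_in_tile, in_int_tile in *; simpl in *;
  destruct F1 as (A1&A2&A3&A4), F2 as (B1&B2&B3&B4);
  apply IZR_le in A1, A2, A3, A4, B1, B2, B3, B4;
  rewrite ?minus_IZR, ?plus_IZR in *;
  repeat split; lra.
Qed.

Lemma cross (sigma : config) a b : Omega sigma ->
  vstick_edge sigma a b -> hstick_edge sigma a b -> False.
Proof.
  intros HO (u1 & u2 & S1 & S2 & F1 & F2 & P) (w1 & w2 & T1 & T2 & G1 & G2 & Q).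
  assert (E := tile_uniq sigma _ _ _ HO S2 T2 F2 G2). subst w2.
  destruct u1 as [p1 q1], u2 as [p2 q2], w1 as [r1 s1].
  unfold face_in_tile, parity in *; simpl in *.
  assert (Hp2 : p2 = a + 1).
  { destruct (Z.eq_dec p2 a); [|lia]. exfalso.
    assert (E := tile_uniq sigma (a-1,b) _ _ HO S1 S2 F1 ltac:(unfold face_in_tile; simpl; lia)).
    inversion E; subst; apply P; reflexivity. }
  assert (Hq2 : q2 = b + 1).
  { destruct (Z.eq_dec q2 b); [|lia]. exfalso.
    assert (E := tile_uniq sigma (a,b-1) _ _ HO T1 S2 G1 ltac:(unfold face_in_tile; simpl; lia)).
    inversion E; subst; apply Q; reflexivity. }
  subst p2 q2.
  assert (Hp1 : p1 = a - 1).
  { destruct (Z.eq_dec p1 a); [|lia]. exfalso.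
    assert (E := tile_uniq sigma (a,b) _ _ HO S1 S2 ltac:(unfold face_in_tile; simpl; lia) F2).
    inversion E; lia. }
  assert (Hs1 : s1 = b - 1).
  { destruct (Z.eq_dec s1 b); [|lia]. exfalso.
    assert (E := tile_uniq sigma (a,b) _ _ HO T1 S2 ltac:(unfold face_in_tile; simpl; lia) F2).
    inversion E; lia. }
  subst p1 s1.
  assert (Hq1 : q1 = b).
  { destruct (Z.eq_dec q1 b); [assumption|]. exfalso. apply P.
    assert (q1 = b + 1) by lia. subst. f_equal.
    replace (a - 1 - 1) with (a + 1 - 1 + (-1) * 2) by lia.
    apply Z_mod_plus_full. }
  assert (Hr1 : r1 = a).
  { destruct (Z.eq_dec r1 a); [assumption|]. exfalso. apply Q.
    assert (r1 = a + 1) by lia. subst. f_equal.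
    replace (b - 1 - 1) with (b + 1 - 1 + (-1) * 2) by lia.
    apply Z_mod_plus_full. }
  subst.
  assert (E := tile_uniq sigma (a-1,b-1) _ _ HO S1 T1
    ltac:(unfold face_in_tile; simpl; lia) ltac:(unfold face_in_tile; simpl; lia)).
  inversion E; lia.
Qed.

Theorem lemma5p1 (N K L : Z) (sigma : config) (u v : Z * Z) :
  2 < N -> 0 <= K -> 0 <= L -> Omega sigma ->
  Psi N K L ver sigma u -> Psi N K L hor sigma v ->
  Z.abs (fst u - fst v) + Z.abs (snd u - snd v) <> 1.
Proof.
  intros HN HK HL HO Hu Hv Habs.
  assert (EK : K * N / N = K) by (apply Z.div_mul; lia).
  assert (EL : L * N / N = L) by (apply Z.div_mul; lia).
  destruct u as [ux uy], v as [vx vy]; simpl in Habs.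
  assert (C : (ux = vx + 1 /\ uy = vy) \/ (ux = vx - 1 /\ uy = vy) \/
              (ux = vx /\ uy = vy + 1) \/ (ux = vx /\ uy = vy - 1)) by lia.
  clear Habs.
  destruct Hu as [Hu|Hu]; destruct Hv as [Hv|Hv]; simpl in Hu, Hv;
  destruct Hu as (x1 & S & (_ & HSint & HSe & _) & _ & HD1 & HD2);
  destruct Hv as (y1 & T & (_ & HTint & HTe & _) & _ & HE1 & HE2);
  unfold vdivides, hdivides, Defs.Rminus, R_rect in *; cbn [fst snd rx ry rW rH] in *;
  rewrite ?EK, ?EL in *;
  destruct HD1 as [[blo [Sblo Hblo]] [[bhi [Sbhi Hbhi]] Hx1]];
  destruct HD2 as [_ [_ Hx1']];
  destruct HE1 as [[alo [Talo Halo]] [[ahi [Tahi Hahi]] Hy1]];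
  destruct HE2 as [_ [_ Hy1']];
  (apply (cross sigma x1 y1 HO);
   [ apply HSe; apply (HSint blo bhi); [exact Sblo|exact Sbhi|]
   | apply HTe; apply (HTint alo ahi); [exact Talo|exact Tahi|] ]);
  (destruct C as [[-> ->]|[[-> ->]|[[-> ->]|[-> ->]]]]; lia).
Qed.
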